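(* Let $N_{\mathrm{rx}}, N_{\mathrm{UE}} \ge 1$ and $1 \le r \le N_{\mathrm{rx}}$ be integers. For $j = 1,\dots,N_{\mathrm{UE}}$ let $\mathbf{Q}_j \in \mathbb{C}^{N_{\mathrm{rx}}\times N_{\mathrm{rx}}}$ be Hermitian positive semidefinite matrices and $\alpha_j > 0$ real numbers. Define $$\mathbf{Q} := \mathbf{I} + \sum_{j=1}^{N_{\mathrm{UE}}} \alpha_j \mathbf{Q}_j, \qquad \mathbf{R}_i := \mathbf{Q} - \alpha_i \mathbf{Q}_i = \mathbf{I} + \sum_{j\neq i}\alpha_j \mathbf{Q}_j$$ for a fixed index $i$. For an $r \times N_{\mathrm{rx}}$ complex matrix $\mathbf{G}$ of full row rank $r$, define $\tilde{\mathbf{R}}_i(\mathbf{G}) := \mathbf{G}\mathbf{R}_i\mathbf{G}^{\mathsf H}$ and $$\overline{C}_i(\mathbf{G}) := \log_2 \det\!\Big(\mathbf{I} + \mathbf{G}\mathbf{Q}_i\mathbf{G}^{\mathsf H}\,\tilde{\mathbf{R}}_i(\mathbf{G})^{-1}\Big).$$ Then a maximizer of $\overline{C}_i(\mathbf{G})$ over all such $\mathbf{G}$ is $$\mathbf{G}_i = \big[\mathbf{Q}_i^{1/2}\mathbf{Q}^{-1/2}\big]_r\,\mathbf{Q}^{-1/2},$$ where for a matrix $\mathbf{A}$, $[\mathbf{A}]_r$ denotes the $r\times N_{\mathrm{rx}}$ matrix whose rows are the (conjugate-transposed) right singular vectors of $\mathbf{A}$ corresponding to its $r$ largest singular values.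
   Context: $\mathbf{Q}_i^{1/2}$ denotes the Hermitian positive semidefinite square root of $\mathbf{Q}_i$, and $\mathbf{Q}^{-1/2}$ the inverse of the Hermitian positive definite square root of $\mathbf{Q}$ (note $\mathbf{Q} \succeq \mathbf{I}$). If $\mathbf{A} = \mathbf{U}\boldsymbol{\Sigma}\mathbf{V}^{\mathsf H}$ is a singular value decomposition with singular values in nonincreasing order, $[\mathbf{A}]_r$ is the matrix formed by the first $r$ rows of $\mathbf{V}^{\mathsf H}$. Superscript $\mathsf H$ denotes conjugate transpose. (Interpretation: $\mathbf{Q}_j$ is the spatial covariance of the uplink channel of user $j$, $\alpha_j$ its transmit SNR, $\mathbf{G}$ a rank-$r$ receive projection for user $i$, and $\overline{C}_i$ a Jensen upper bound on the ergodic capacity of the projected system.) *)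

(* Defs.v *)
From mathcomp Require Import all_boot all_algebra.
From mathcomp Require Import all_classical all_reals all_analysis.
From mathcomp Require Export complex.
Set Implicit Arguments. Unset Strict Implicit. Unset Printing Implicit Defensive.
Import GRing.Theory Num.Theory.
Local Open Scope ring_scope.
Local Open Scope complex_scope.

Definition ctrmx (R : realType) (m n : nat) (A : 'M[R[i]]_(m, n)) : 'M[R[i]]_(n, m) :=
  (map_mx Num.conj A)^T.

Definition hermitian (R : realType) (n : nat) (A : 'M[R[i]]_n) : Prop :=
  ctrmx A = A.

Definition psd (R : realType) (n : nat) (A : 'M[R[i]]_n) : Prop :=
  hermitian A /\ forall v : 'cV[R[i]]_n, 0 <= (ctrmx v *m A *m v) 0 0.

Definition pd (R : realType) (n : nat) (A : 'M[R[i]]_n) : Prop :=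
  hermitian A /\ forall v : 'cV[R[i]]_n, v != 0 -> 0 < (ctrmx v *m A *m v) 0 0.

Definition unitary (R : realType) (n : nat) (U : 'M[R[i]]_n) : Prop :=
  U *m ctrmx U = 1%:M /\ ctrmx U *m U = 1%:M.

Definition is_psd_sqrt (R : realType) (n : nat) (A S : 'M[R[i]]_n) : Prop :=
  psd S /\ S *m S = A.

Definition is_svd (R : realType) (n : nat) (A U V : 'M[R[i]]_n) (s : 'I_n -> R) : Prop :=
  [/\ unitary U, unitary V,
      (forall k, 0 <= s k),
      (forall k l : 'I_n, (k <= l)%N -> s l <= s k) &
      A = U *m diag_mx (\row_k (s k)%:C) *m ctrmx V].

(* [A]_r given the SVD factor V: the first r rows of V^H *)
Definition first_rows (R : realType) (n r : nat) (Hr : (r <= n)%N)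
  (Vh : 'M[R[i]]_n) : 'M[R[i]]_(r, n) :=
  rowsub (widen_ord Hr) Vh.

Definition Qsum (R : realType) (n K : nat) (alpha : 'I_K -> R)
  (Q : 'I_K -> 'M[R[i]]_n) : 'M[R[i]]_n :=
  1%:M + \sum_(j < K) (alpha j)%:C *: Q j.

Definition Rint (R : realType) (n K : nat) (alpha : 'I_K -> R)
  (Q : 'I_K -> 'M[R[i]]_n) (i : 'I_K) : 'M[R[i]]_n :=
  Qsum alpha Q - (alpha i)%:C *: Q i.

Definition log2 (R : realType) (x : R) : R := ln x / ln 2.

(* Cbar_i(G) = log2 det(I + G Q_i G^H (G R_i G^H)^{-1}); the determinant is real
   positive for full-row-rank G, we take log2 of its real part. *)
Definition Cbar (R : realType) (n K r : nat) (alpha : 'I_K -> R)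
  (Q : 'I_K -> 'M[R[i]]_n) (i : 'I_K) (G : 'M[R[i]]_(r, n)) : R :=
  log2 (complex.Re (\det (1%:M + G *m Q i *m ctrmx G
                             *m invmx (G *m Rint alpha Q i *m ctrmx G)))).

(* Main.v *)
Require Import Defs.
From mathcomp Require Import all_boot all_order all_fingroup all_algebra.
From mathcomp Require Import all_classical all_reals all_analysis.
From mathcomp Require Import complex.
From mathcomp Require Import zify ring lra.
Set Implicit Arguments. Unset Strict Implicit. Unset Printing Implicit Defensive.
Import Order.TTheory GRing.Theory Num.Theory.
Local Open Scope ring_scope.
Local Open Scope complex_scope.

Section CB.
Variable K : comPzRingType.

Lemma cb_step1 r n (X : 'M[K]_(r, n)) (Y : 'M[K]_(n, r)) :
  \det (X *m Y) = \sum_(g : {ffun 'I_r -> 'I_n})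
     (\prod_i X i (g i)) * \det (rowsub g Y).
Proof.
rewrite /determinant.
transitivity (\sum_(s : 'S_r) \sum_(g : {ffun 'I_r -> 'I_n})
   (-1) ^+ s * ((\prod_i X i (g i)) * \prod_i Y (g i) (s i))).
  apply: eq_bigr => s _; rewrite -big_distrr /=; congr (_ * _).
  rewrite (eq_bigr (fun i => \sum_j X i j * Y j (s i))); last first.
    by move=> i _; rewrite mxE.
  rewrite bigA_distr_bigA /=; apply: eq_bigr => g _.
  by rewrite big_split.
rewrite exchange_big /=; apply: eq_bigr => g _.
rewrite big_distrr /=; apply: eq_bigr => s _.
rewrite mulrCA; congr (_ * (_ * _)).
by apply: eq_bigr => i _; rewrite mxE.
Qed.

Lemma cb_sym r n (X : 'M[K]_(r, n)) (Y : 'M[K]_(n, r)) :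
  r`!%:R * \det (X *m Y) = \sum_(g : {ffun 'I_r -> 'I_n})
     \det (colsub g X) * \det (rowsub g Y).
Proof.
have Ht : forall t : 'S_r, \det (X *m Y) = \sum_(g : {ffun 'I_r -> 'I_n})
    (-1) ^+ t * ((\prod_i X i (g (t i))) * \det (rowsub g Y)).
  move=> t; rewrite cb_step1.
  pose h (g : {ffun 'I_r -> 'I_n}) : {ffun 'I_r -> 'I_n} := [ffun i => g (t i)].
  have hinj : injective h.
    move=> g1 g2 /ffunP E; apply/ffunP => i.
    have := E (t^-1 i)%g; rewrite !ffunE permKV //.
  rewrite (reindex_inj hinj) /=; apply: eq_bigr => g _.
  rewrite mulrCA; congr (_ * _).
    by apply: eq_bigr => i _; rewrite ffunE.
  have -> : rowsub (h g) Y = row_perm t (rowsub g Y).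
    by apply/matrixP => i j; rewrite !mxE ffunE.
  by rewrite row_permE det_mulmx det_perm.
rewrite (_ : r`!%:R * _ = \sum_(t : 'S_r) \det (X *m Y)); last first.
  by rewrite sumr_const card_Sn mulr_natl.
transitivity (\sum_(t : 'S_r) \sum_(g : {ffun 'I_r -> 'I_n})
    (-1) ^+ t * ((\prod_i X i (g (t i))) * \det (rowsub g Y))).
  by apply: eq_bigr => t _; exact: Ht.
rewrite exchange_big /=.
apply: eq_bigr => g _.
under eq_bigr => t _ do rewrite mulrA.
rewrite -big_distrl /=; congr (_ * _).
rewrite /determinant; apply: eq_bigr => t _; congr (_ * _).
by apply: eq_bigr => i _; rewrite mxE.
Qed.
End CB.
Section Comb.
Variable R : realDomainType.

Lemma comb_seq (f : nat -> R) n (s : seq nat) :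
  (forall k, (k < n)%N -> 0 < f k) ->
  (forall k l, (k <= l)%N -> (l < n)%N -> f l <= f k) ->
  uniq s -> all (fun k => k < n)%N s ->
  \prod_(k <- s) f k <= \prod_(k < size s) f k.
Proof.
elim: n s => [|n IH] s fpos fmon us alls.
  by case: s alls us => [|x s] //=; rewrite big_nil big_ord0.
have fpos' : forall k, (k < n)%N -> 0 < f k by move=> k kn; apply: fpos; lia.
have fmon' : forall k l, (k <= l)%N -> (l < n)%N -> f l <= f k.
  by move=> k l kl ln; apply: fmon => //; lia.
case: (boolP (n \in s)) => ns; last first.
  apply: IH => //; apply/allP => x xs.
  have := allP alls x xs; have : x != n by apply: contraNneq ns => <-.
  move=> /eqP xn /= xn1; lia.
have pe := perm_to_rem ns.
rewrite (perm_big _ pe) big_cons (perm_size pe) /= big_ord_recr /=.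
set m := size (rem n s).
have urem : uniq (rem n s) by apply: rem_uniq.
have allrem : all (fun k => k < n)%N (rem n s).
  apply/allP => x; rewrite mem_rem_uniq // inE => /andP [xn xs].
  move: (allP alls x xs) => /= xn1; move/eqP: xn => xn; lia.
have IHr := IH _ fpos' fmon' urem allrem.
have sizes : (size s <= n.+1)%N.
  have -> : n.+1 = size (iota 0 n.+1) by rewrite size_iota.
  apply: uniq_leq_size => // x xs; rewrite mem_iota /=.
  by have := allP alls x xs.
have msz : (m.+1 = size s)%N by rewrite (perm_size pe).
have p0 : 0 <= \prod_(k < m) f k.
  by apply: prodr_ge0 => k _; apply: ltW; apply: fpos; have := ltn_ord k; lia.
apply: (le_trans (y := f n * \prod_(k < m) f k)).
  by apply: ler_wpM2l => //; apply: ltW; apply: fpos.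
rewrite mulrC; apply: ler_wpM2l => //; apply: fmon; lia.
Qed.

Lemma comb_ord n r (Hr : (r <= n)%N) (nu : 'I_n -> R) (g : 'I_r -> 'I_n) :
  (forall k, 0 < nu k) -> (forall k l : 'I_n, (k <= l)%N -> nu l <= nu k) ->
  injective g ->
  \prod_i nu (g i) <= \prod_(i < r) nu (widen_ord Hr i).
Proof.
move=> pos mon ginj.
pose f (k : nat) := oapp nu 0 (insub k).
have fE : forall k : 'I_n, f k = nu k by move=> k; rewrite /f valK.
pose s := [seq val (g i) | i <- enum 'I_r].
have -> : \prod_i nu (g i) = \prod_(k <- s) f k.
  by rewrite big_map big_enum /=; apply: eq_bigr => i _; rewrite fE.
have szs : size s = r by rewrite size_map size_enum_ord.
have -> : \prod_(i < r) nu (widen_ord Hr i) = \prod_(k < size s) f k.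
  rewrite szs; apply: eq_bigr => i _.
  by rewrite -(fE (widen_ord Hr i)).
apply: (@comb_seq f n).
- by move=> k kn; rewrite -[k]/(val (Ordinal kn)) fE.
- move=> k l kl ln; have kn : (k < n)%N by lia.
  by rewrite -[k]/(val (Ordinal kn)) -[l]/(val (Ordinal ln)) !fE; apply: mon.
- rewrite map_inj_uniq ?enum_uniq // => x y /val_inj; exact: ginj.
- apply/allP => x /mapP [i _ ->] /=; exact: ltn_ord.
Qed.
End Comb.

Section Cx.
Variable R : realType.
Local Notation C := R[i].

Lemma ctrmxM m n p (A : 'M[C]_(m, n)) (B : 'M[C]_(n, p)) :
  ctrmx (A *m B) = ctrmx B *m ctrmx A.
Proof. by rewrite /ctrmx map_mxM trmx_mul. Qed.

Lemma ctrmxK m n (A : 'M[C]_(m, n)) : ctrmx (ctrmx A) = A.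
Proof. by apply/matrixP => i j; rewrite !mxE conjCK. Qed.

Lemma ctrmxD m n (A B : 'M[C]_(m, n)) : ctrmx (A + B) = ctrmx A + ctrmx B.
Proof. by apply/matrixP => i j; rewrite !mxE rmorphD. Qed.

Lemma ctrmxB m n (A B : 'M[C]_(m, n)) : ctrmx (A - B) = ctrmx A - ctrmx B.
Proof. by apply/matrixP => i j; rewrite !mxE rmorphB. Qed.

Lemma ctrmx1 n : ctrmx (1%:M : 'M[C]_n) = 1%:M.
Proof. by apply/matrixP => i j; rewrite !mxE eq_sym rmorph_nat. Qed.

Lemma conj_real (x : R) : Num.conj (x%:C) = x%:C :> C.
Proof. exact: conjc_real. Qed.

Lemma conjM (x y : C) : Num.conj (x * y) = Num.conj x * Num.conj y.
Proof. exact: rmorphM. Qed.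

Lemma ctrmxZr m n (x : R) (A : 'M[C]_(m, n)) : ctrmx (x%:C *: A) = x%:C *: ctrmx A.
Proof. by apply/matrixP => i j; rewrite !mxE conjM conj_real. Qed.

Lemma ctrmx_inv n (A : 'M[C]_n) : ctrmx (invmx A) = invmx (ctrmx A).
Proof. by rewrite /ctrmx map_invmx trmx_inv. Qed.

Lemma ctrmx_diag n (d : 'I_n -> R) :
  ctrmx (diag_mx (\row_k (d k)%:C)) = diag_mx (\row_k (d k)%:C).
Proof.
apply/matrixP => i j; rewrite !mxE eq_sym.
by case: eqP => [->|_]; rewrite ?mulr1n ?mulr0n ?conj_real ?conjC0.
Qed.

Lemma det_ctrmx n (A : 'M[C]_n) : \det (ctrmx A) = Num.conj (\det A).
Proof. by rewrite /ctrmx det_tr det_map_mx. Qed.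

Lemma rowsub_ctrmx r n (g : 'I_r -> 'I_n) (H : 'M[C]_(r, n)) :
  rowsub g (ctrmx H) = ctrmx (colsub g H).
Proof. by apply/matrixP => i j; rewrite !mxE. Qed.

Lemma cb_diag r n (H : 'M[C]_(r, n)) (d : 'I_n -> R) :
  r`!%:R * \det (H *m diag_mx (\row_k (d k)%:C) *m ctrmx H) =
  \sum_(g : {ffun 'I_r -> 'I_n})
     (\prod_i (d (g i))%:C) * (\det (colsub g H) * Num.conj (\det (colsub g H))).
Proof.
rewrite cb_sym; apply: eq_bigr => g _.
rewrite rowsub_ctrmx det_ctrmx mulrA; congr (_ * _).
have -> : colsub g (H *m diag_mx (\row_k (d k)%:C)) =
    colsub g H *m diag_mx (\row_i (d (g i))%:C).
  by apply/matrixP => i j; rewrite !mul_mx_diag !mxE.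
rewrite (det_mulmx (colsub g H)) det_diag mulrC; congr (_ * _).
by apply: eq_bigr => i _; rewrite mxE.
Qed.

Lemma sum_gt0 n (F : 'I_n -> C) :
  (forall k, 0 <= F k) -> (exists k, 0 < F k) -> 0 < \sum_k F k.
Proof.
move=> F0 [k Fk]; rewrite (bigD1 k) //=.
by apply: (lt_le_trans Fk); rewrite lerDl sumr_ge0.
Qed.

Lemma rV_neq0 n (v : 'rV[C]_n) : v != 0 -> exists k, v 0 k != 0.
Proof.
move=> v0; apply/existsP; apply: contraR v0 => /existsPn H.
apply/eqP/matrixP => i j; rewrite ord1 mxE; exact/eqP/negbNE/H.
Qed.

Lemma qf_diag n (u : 'rV[C]_n) (d : 'I_n -> R) :
  (u *m diag_mx (\row_k (d k)%:C) *m ctrmx u) 0 0 =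
  \sum_k (d k)%:C * (u 0 k * Num.conj (u 0 k)).
Proof.
rewrite mul_mx_diag mxE; apply: eq_bigr => k _; rewrite !mxE; ring.
Qed.

Lemma qf_diag_gt0 n (u : 'rV[C]_n) (d : 'I_n -> R) :
  (forall k, 0 < d k) -> u != 0 -> 0 < (u *m diag_mx (\row_k (d k)%:C) *m ctrmx u) 0 0.
Proof.
move=> dpos u0; rewrite qf_diag; apply: sum_gt0.
  by move=> k; rewrite mulr_ge0 ?mul_conjC_ge0 // ler0c ltW.
have [k uk] := rV_neq0 u0; exists k.
by rewrite mulr_gt0 ?mul_conjC_gt0 // ltcR.
Qed.

Lemma qf_id_gt0 n (u : 'rV[C]_n) : u != 0 -> 0 < (u *m ctrmx u) 0 0.
Proof.
move=> u0; have := @qf_diag_gt0 n u (fun _ => 1) (fun _ => ltr01) u0.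
suff -> : u *m diag_mx (\row_k (1:R)%:C) = u by [].
by apply/matrixP => i j; rewrite mul_mx_diag !mxE mulr1.
Qed.

Lemma pd_unit n (M : 'M[C]_n) :
  (forall v : 'rV_n, v != 0 -> 0 < (v *m M *m ctrmx v) 0 0) -> M \in unitmx.
Proof.
move=> H; rewrite unitmxE unitfE; apply/negP => /det0P [v v0 vM].
by have := H v v0; rewrite vM mul0mx mxE ltxx.
Qed.

End Cx.

Section Key.
Variable R : realType.
Local Notation C := R[i].
Local Notation D d := (diag_mx (\row_k ((d k)%:C : C))).

Lemma hdh_pd r n (H : 'M[C]_(r, n)) (d : 'I_n -> R) :
  (forall k, 0 < d k) -> row_free H ->
  forall v : 'rV_r, v != 0 -> 0 < (v *m (H *m D d *m ctrmx H) *m ctrmx v) 0 0.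
Proof.
move=> dpos Hf v v0.
have -> : v *m (H *m D d *m ctrmx H) *m ctrmx v =
    (v *m H) *m D d *m ctrmx (v *m H).
  by rewrite ctrmxM !mulmxA.
apply: qf_diag_gt0 => //; by rewrite mulmx_free_eq0.
Qed.

Lemma hdh_unit r n (H : 'M[C]_(r, n)) (d : 'I_n -> R) :
  (forall k, 0 < d k) -> row_free H -> H *m D d *m ctrmx H \in unitmx.
Proof. by move=> dpos Hf; apply: pd_unit; apply: hdh_pd. Qed.

Lemma wg_ge0 r n (H : 'M[C]_(r, n)) (g : 'I_r -> 'I_n) :
  0 <= \det (colsub g H) * Num.conj (\det (colsub g H)).
Proof. exact: mul_conjC_ge0. Qed.

Lemma hdh_det_gt0 r n (H : 'M[C]_(r, n)) (d : 'I_n -> R) :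
  (forall k, 0 < d k) -> row_free H -> 0 < \det (H *m D d *m ctrmx H).
Proof.
move=> dpos Hf; rewrite lt_def.
have := hdh_unit dpos Hf; rewrite unitmxE unitfE => -> /=.
have rpos : 0 < (r`!%:R : C) by rewrite ltr0n fact_gt0.
rewrite -(pmulr_rge0 _ rpos) cb_diag; apply: sumr_ge0 => g _.
apply: mulr_ge0; last exact: wg_ge0.
by apply: prodr_ge0 => i _; rewrite ler0c ltW.
Qed.

Lemma real_step r n (Hr : (r <= n)%N) (nu c : 'I_n -> R) (g : 'I_r -> 'I_n) :
  (forall k, 0 < nu k) -> (forall k, 0 < c k) ->
  (forall k l : 'I_n, (k <= l)%N -> nu l <= nu k) -> injective g ->
  \prod_i (nu (g i) * c (g i)) * \prod_(k < r) c (widen_ord Hr k) <=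
  \prod_(k < r) (nu (widen_ord Hr k) * c (widen_ord Hr k)) * \prod_i c (g i).
Proof.
move=> nupos cpos mon ginj.
rewrite !big_split /=.
have cp1 : 0 <= \prod_i c (g i) by apply: prodr_ge0 => i _; apply: ltW.
have cp2 : 0 <= \prod_(i < r) c (widen_ord Hr i) by apply: prodr_ge0 => i _; apply: ltW.
rewrite -mulrA [X in _ <= X]mulrAC -[X in _ <= X]mulrA.
apply: ler_wpM2r; first exact: mulr_ge0.
exact: comb_ord.
Qed.

Lemma key r n (Hr : (r <= n)%N) (H : 'M[C]_(r, n)) (a c : 'I_n -> R) :
  (forall k, 0 < a k) -> (forall k, 0 < c k) ->
  (forall k l : 'I_n, (k <= l)%N -> a l / c l <= a k / c k) -> row_free H ->
  \det (H *m D a *m ctrmx H) * \prod_(k < r) (c (widen_ord Hr k))%:C <=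
  \prod_(k < r) (a (widen_ord Hr k))%:C * \det (H *m D c *m ctrmx H).
Proof.
move=> apos cpos mon Hf.
have rpos : 0 < (r`!%:R : C) by rewrite ltr0n fact_gt0.
rewrite -(ler_pM2l rpos) mulrA cb_diag mulrCA cb_diag.
rewrite big_distrl big_distrr /=; apply: ler_sum => g _.
set w := _ * Num.conj _.
have w0 : 0 <= w by exact: wg_ge0.
case: (eqVneq w 0) => [->|wn0]; first by rewrite !(mulr0, mul0r).
have ginj : injective g.
  apply/injectiveP; apply: contraR wn0 => /injectivePn [i1 [i2 Di12 E]].
  rewrite /w (_ : \det (colsub g H) = 0) ?mul0r //.
  rewrite -det_tr; apply: (determinant_alternate Di12) => j.
  by rewrite !mxE E.
clearbody w.
rewrite mulrAC [X in _ <= X]mulrA.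
apply: ler_wpM2r => //.
rewrite -!rmorph_prod -!rmorphM lecR.
have aE k : a k = a k / c k * c k by rewrite divfK // gt_eqF.
rewrite (eq_bigr (fun i => a (g i) / c (g i) * c (g i))); last by move=> i _; rewrite -aE.
rewrite [X in _ <= X * _](eq_bigr (fun i => a (widen_ord Hr i) / c (widen_ord Hr i) * c (widen_ord Hr i)));
  last by move=> i _; rewrite -aE.
apply: (@real_step _ _ _ (fun k => a k / c k)) => // k.
by rewrite divr_gt0.
Qed.

End Key.

Section Aux.
Variable R : realType.
Local Notation C := R[i].
Local Notation D d := (diag_mx (\row_k ((d k)%:C : C))).

Lemma qfD n (v : 'rV[C]_n) (M1 M2 : 'M[C]_n) :
  (v *m (M1 + M2) *m ctrmx v) 0 0 =
  (v *m M1 *m ctrmx v) 0 0 + (v *m M2 *m ctrmx v) 0 0.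
Proof. by rewrite mulmxDr mulmxDl mxE. Qed.

Lemma qfZ n (v : 'rV[C]_n) (x : C) (M : 'M[C]_n) :
  (v *m (x *: M) *m ctrmx v) 0 0 = x * (v *m M *m ctrmx v) 0 0.
Proof. by rewrite -scalemxAr -scalemxAl mxE. Qed.

Lemma qf_sum n I (r : seq I) (P : pred I) (v : 'rV[C]_n) (M : I -> 'M[C]_n) :
  (v *m (\sum_(j <- r | P j) M j) *m ctrmx v) 0 0 =
  \sum_(j <- r | P j) (v *m M j *m ctrmx v) 0 0.
Proof. by rewrite mulmx_sumr mulmx_suml summxE. Qed.

Lemma qf_psd n (v : 'rV[C]_n) (M : 'M[C]_n) : psd M -> 0 <= (v *m M *m ctrmx v) 0 0.
Proof. by move=> [_ /(_ (ctrmx v))]; rewrite ctrmxK. Qed.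

Lemma diag_mulC n (d1 d2 : 'I_n -> R) :
  D d1 *m D d2 = D (fun k => d1 k * d2 k).
Proof.
apply/matrixP => i j; rewrite mul_diag_mx !mxE.
by case: eqP => [->|_]; rewrite ?mulr1n ?mulr0n ?mulr0 // rmorphM.
Qed.

Lemma diag_addC n (d1 d2 : 'I_n -> R) :
  D d1 + D d2 = D (fun k => d1 k + d2 k).
Proof.
apply/matrixP => i j; rewrite !mxE.
by case: eqP => [->|_]; rewrite ?mulr1n ?mulr0n ?addr0 // rmorphD.
Qed.

Lemma diag_subC n (x : R) (d : 'I_n -> R) :
  1%:M - x%:C *: D d = D (fun k => 1 - x * d k).
Proof.
apply/matrixP => i j; rewrite !mxE.
by case: eqP => [->|_]; rewrite ?mulr1n ?mulr0n ?mulr0 ?subr0 // rmorphB rmorphM rmorph1.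
Qed.

Lemma ctrmx_delta n (k : 'I_n) : ctrmx (delta_mx 0 k : 'rV[C]_n) = delta_mx k 0.
Proof.
apply/matrixP => i j; rewrite !mxE.
by rewrite andbC; case: (_ && _); rewrite ?conjC0 ?conjC1.
Qed.

Lemma qf_delta n (k : 'I_n) (M : 'M[C]_n) :
  ((delta_mx 0 k : 'rV[C]_n) *m M *m ctrmx (delta_mx 0 k : 'rV[C]_n)) 0 0 = M k k.
Proof. by rewrite ctrmx_delta -rowE -colE !mxE. Qed.

Lemma E_mul r n (Hr : (r <= n)%N) (M : 'M[C]_n) :
  rowsub (widen_ord Hr) 1%:M *m M *m ctrmx (rowsub (widen_ord Hr) 1%:M) =
  mxsub (widen_ord Hr) (widen_ord Hr) M.
Proof.
have -> : ctrmx (rowsub (widen_ord Hr) (1%:M : 'M[C]_n)) = colsub (widen_ord Hr) 1%:M.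
  by apply/matrixP => i j; rewrite !mxE eq_sym; case: (_ == _); rewrite ?conjC0 ?conjC1.
rewrite -mulmxA mulmx_colsub mulmx1.
by apply/matrixP => i j; rewrite mul_rowsub_mx mul1mx !mxE.
Qed.

Lemma E_diag r n (Hr : (r <= n)%N) (d : 'I_n -> R) :
  \det (rowsub (widen_ord Hr) 1%:M *m D d *m ctrmx (rowsub (widen_ord Hr) 1%:M))
  = \prod_(k < r) (d (widen_ord Hr k))%:C.
Proof.
rewrite E_mul.
have -> : mxsub (widen_ord Hr) (widen_ord Hr) (D d) = D (fun k => d (widen_ord Hr k)).
  by apply/matrixP => i j; rewrite !mxE.
by rewrite det_diag; apply: eq_bigr => k _; rewrite mxE.
Qed.

Lemma E_free r n (Hr : (r <= n)%N) : row_free (rowsub (widen_ord Hr) (1%:M : 'M[C]_n)).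
Proof.
apply/row_freeP; exists (colsub (widen_ord Hr) 1%:M).
rewrite mulmx_colsub mulmx1; apply/matrixP => i j; rewrite !mxE //.
Qed.

End Aux.

Theorem lemma1 (R : realType) (Nrx NUE r : nat)
  (HNrx : (1 <= Nrx)%N) (HNUE : (1 <= NUE)%N)
  (Hr1 : (1 <= r)%N) (Hr : (r <= Nrx)%N)
  (Q : 'I_NUE -> 'M[R[i]]_Nrx) (alpha : 'I_NUE -> R)
  (HQ : forall j, psd (Q j)) (Halpha : forall j, 0 < alpha j)
  (i : 'I_NUE)
  (Si S : 'M[R[i]]_Nrx)
  (HSi : is_psd_sqrt (Q i) Si)
  (HS : is_psd_sqrt (Qsum alpha Q) S)
  (U V : 'M[R[i]]_Nrx) (s : 'I_Nrx -> R)
  (Hsvd : is_svd (Si *m invmx S) U V s) :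
  let Gi := first_rows Hr (ctrmx V) *m invmx S in
  \rank Gi = r /\
  forall G : 'M[R[i]]_(r, Nrx), \rank G = r ->
    Cbar alpha Q i G <= Cbar alpha Q i Gi.
Proof.
move=> Gi.
case: HSi => [[hSi _] SiSi].
case: HS => [[hS _] SS].
case: Hsvd => [[UU1 UU2] [VV1 VV2] s0 smon Asvd].
set al := alpha i.
set Qs := Qsum alpha Q.
set Rt := Defs.Rint alpha Q i.
have RtE : Rt = 1%:M + \sum_(j | j != i) (alpha j)%:C *: Q j.
  rewrite /Rt /Defs.Rint /Qsum (bigD1 i) //=.
  by rewrite addrCA (addrC ((alpha i)%:C *: Q i)) addrK.
have qRt : forall v : 'rV_Nrx, v != 0 -> 0 < (v *m Rt *m ctrmx v) 0 0.
  move=> v v0; rewrite RtE qfD mulmx1 qf_sum.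
  apply: (lt_le_trans (qf_id_gt0 v0)); rewrite lerDl.
  apply: sumr_ge0 => j _; rewrite qfZ mulr_ge0 ?qf_psd //.
  by rewrite ler0c ltW.
have QsE : Qs = Rt + al%:C *: Q i by rewrite /Rt /Defs.Rint subrK.
have qQs : forall v : 'rV_Nrx, v != 0 -> 0 < (v *m Qs *m ctrmx v) 0 0.
  move=> v v0; rewrite QsE qfD qfZ; apply: ltr_wpDr; last exact: qRt.
  by apply: mulr_ge0; [rewrite (ler0c al); exact: ltW (Halpha i) | exact: qf_psd].
have Qsu : Qs \in unitmx by apply: pd_unit.
have Su : S \in unitmx by move: Qsu; rewrite /Qs -SS unitmx_mul => /andP [].
set P := invmx S.
have SP : S *m P = 1%:M by rewrite mulmxV.
have PS : P *m S = 1%:M by rewrite mulVmx.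
have hP : ctrmx P = P by rewrite /P ctrmx_inv hS.
have Pu : P \in unitmx by rewrite unitmx_inv.
have Vu : V \in unitmx by case: (mulmx1_unit VV1).
have Vhu : ctrmx V \in unitmx by case: (mulmx1_unit VV1).
set T := ctrmx V *m P.
have Tu : T \in unitmx by rewrite unitmx_mul Vhu Pu.
have hT : ctrmx T = P *m V by rewrite /T ctrmxM hP ctrmxK.
pose lam k := s k ^+ 2.
pose c k := 1 - al * lam k.
pose a k := 1 + (1 - al) * lam k.
have TQT : T *m Q i *m ctrmx T = diag_mx (\row_k ((lam k)%:C)).
  have PSi : P *m Si = V *m diag_mx (\row_k (s k)%:C) *m ctrmx U.
    have -> : P *m Si = ctrmx (Si *m P) by rewrite ctrmxM hP hSi.
    by rewrite Asvd !ctrmxM ctrmxK ctrmx_diag mulmxA.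
  rewrite hT /T -SiSi.
  have -> : ctrmx V *m P *m (Si *m Si) *m (P *m V) =
      ctrmx V *m (P *m Si) *m (Si *m P) *m V by rewrite !mulmxA.
  rewrite PSi Asvd.
  have -> : ctrmx V *m (V *m diag_mx (\row_k (s k)%:C) *m ctrmx U) *m
      (U *m diag_mx (\row_k (s k)%:C) *m ctrmx V) *m V =
      (ctrmx V *m V) *m diag_mx (\row_k (s k)%:C) *m (ctrmx U *m U) *m
      diag_mx (\row_k (s k)%:C) *m (ctrmx V *m V) by rewrite !mulmxA.
  by rewrite VV2 UU2 !mulmx1 mul1mx diag_mulC.
have TQsT : T *m Qs *m ctrmx T = 1%:M.
  rewrite hT /T /Qs -SS.
  have -> : ctrmx V *m P *m (S *m S) *m (P *m V) =
      ctrmx V *m (P *m S) *m (S *m P) *m V by rewrite !mulmxA.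
  by rewrite PS SP !mulmx1 VV2.
have TRT : T *m Rt *m ctrmx T = diag_mx (\row_k ((c k)%:C)).
  rewrite /Rt /Defs.Rint -/Qs mulmxBr mulmxBl -scalemxAr -scalemxAl TQsT TQT.
  by rewrite diag_subC.
have cpos : forall k, 0 < c k.
  move=> k; rewrite -ltcR.
  have dk : diag_mx (\row_k ((c k)%:C : R[i])) k k = (c k)%:C by rewrite !mxE eqxx mulr1n.
  have gen : forall e : 'rV[R[i]]_Nrx,
      e *m (T *m Rt *m ctrmx T) *m ctrmx e = (e *m T) *m Rt *m ctrmx (e *m T).
    by move=> e; rewrite ctrmxM !mulmxA.
  rewrite -dk -TRT -(qf_delta k) gen.
  apply: qRt; rewrite mulmx_free_eq0 ?row_free_unit //.
  apply/eqP => /matrixP /(_ 0 k); rewrite !mxE !eqxx /= => /eqP.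
  by rewrite oner_eq0.
have lam0 : forall k, 0 <= lam k by move=> k; rewrite /lam sqr_ge0.
have apos : forall k, 0 < a k.
  move=> k; have : a k = c k + lam k by rewrite /a /c; ring.
  by move=> ->; apply: ltr_wpDr; [exact: lam0 | exact: cpos].
have amon : forall k l : 'I_Nrx, (k <= l)%N -> a l / c l <= a k / c k.
  move=> k l kl.
  have lkl : lam l <= lam k.
    by rewrite /lam ler_pXn2r ?nnegrE ?s0 ?smon.
  rewrite ler_pdivrMr ?cpos // mulrAC ler_pdivlMr ?cpos //.
  have := cpos k; have := cpos l; rewrite /a /c => ck cl.
  nra.
have formula : forall G : 'M[R[i]]_(r, Nrx), row_free (G *m S *m V) ->
    Cbar alpha Q i G = log2 (complex.Re
      (\det (G *m S *m V *m diag_mx (\row_k ((a k)%:C)) *m ctrmx (G *m S *m V)) /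
       \det (G *m S *m V *m diag_mx (\row_k ((c k)%:C)) *m ctrmx (G *m S *m V)))).
  move=> G Hf; set H := G *m S *m V.
  have GE : G = H *m T.
    rewrite /H /T.
    have -> : G *m S *m V *m (ctrmx V *m P) = G *m (S *m (V *m ctrmx V) *m P)
      by rewrite !mulmxA.
    by rewrite VV1 mulmx1 SP mulmx1.
  have sand : forall M, G *m M *m ctrmx G = H *m (T *m M *m ctrmx T) *m ctrmx H.
    by move=> M; rewrite GE ctrmxM !mulmxA.
  rewrite /Cbar -/Rt !sand TQT TRT.
  set Y := H *m diag_mx (\row_k ((c k)%:C)) *m ctrmx H.
  set X := H *m diag_mx (\row_k ((lam k)%:C)) *m ctrmx H.
  have Yu : Y \in unitmx by apply: hdh_unit.
  have -> : 1%:M + X *m invmx Y = (Y + X) *m invmx Y by rewrite mulmxDl mulmxV.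
  have -> : Y + X = H *m diag_mx (\row_k ((a k)%:C)) *m ctrmx H.
    rewrite /Y /X -mulmxDl -mulmxDr diag_addC.
    congr (_ *m _ *m _); apply/matrixP => p q; rewrite !mxE.
    by congr (_%:C *+ _); rewrite /a /c; ring.
  by rewrite det_mulmx det_inv.
set E := rowsub (widen_ord Hr) (1%:M : 'M[R[i]]_Nrx).
have GiE : Gi *m S *m V = E.
  rewrite /Gi /first_rows -/P.
  have -> : rowsub (widen_ord Hr) (ctrmx V) *m P *m S *m V =
     rowsub (widen_ord Hr) (ctrmx V) *m (P *m S) *m V by rewrite !mulmxA.
  by rewrite PS mulmx1 mul_rowsub_mx VV2.
have SVu : S *m V \in unitmx by rewrite unitmx_mul Su Vu.
have rkGi : \rank Gi = r.
  apply/eqP; rewrite eqn_leq rank_leq_row andTb.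
  have h1 := mxrankM_maxl Gi (S *m V).
  rewrite mulmxA GiE in h1.
  have h2 : \rank E = r := eqP (@E_free R _ _ Hr).
  by rewrite h2 in h1.
split; first exact: rkGi.
move=> G rkG.
have HfG : row_free (G *m S *m V).
  rewrite /row_free -(mulmxA G S V) (mxrankMfree G (B := S *m V)).
    by rewrite rkG.
  by rewrite row_free_unit.
have HfGi : row_free (Gi *m S *m V) by rewrite GiE; exact: (@E_free R _ _ Hr).
rewrite (formula G HfG) (formula Gi HfGi) GiE !E_diag.
set x := _ / _.
set y := _ / _.
have Pcpos : 0 < \prod_(k < r) ((c (widen_ord Hr k))%:C : R[i]).
  by apply: prodr_gt0 => k _; rewrite ltcR.
have xpos : 0 < x by rewrite /x divr_gt0 // hdh_det_gt0.
have xy : x <= y.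
  rewrite /x /y ler_pdivrMr ?hdh_det_gt0 // mulrAC ler_pdivlMr //.
  exact: key.
have Rexpos : 0 < complex.Re x by move: xpos; rewrite ltcE => /andP [].
have Rexy : complex.Re x <= complex.Re y by move: xy; rewrite lecE => /andP [].
have Reypos : 0 < complex.Re y by apply: (lt_le_trans Rexpos).
rewrite /log2; apply: ler_wpM2r.
  by rewrite invr_ge0 ln_ge0 // ler1n.
by rewrite ler_ln ?posrE.
Qed.
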